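(* Let an $(n,k)$ binary linear block code encode information words $\boldsymbol{b}=(b_1,\dots,b_k)\in\{0,1\}^k$ into codewords; list all $2^k$ information words as $\boldsymbol{b}^{(1)},\dots,\boldsymbol{b}^{(2^k)}$ and let $\boldsymbol{c}^{(j)}\in\{0,1\}^n$ be the codeword encoding $\boldsymbol{b}^{(j)}$. Consider the three-layer network with $n$ input neurons, $2^k$ hidden neurons and $k$ output neurons, with zero biases, defined as follows: the $n\times 2^k$ binary weight matrix $\boldsymbol{W}_1$ has $j$-th column $\boldsymbol{c}^{(j)}$; the $2^k\times k$ binary weight matrix $\boldsymbol{W}_2$ has $j$-th row $\boldsymbol{b}^{(j)}$; the hidden layer applies the scaled softmax with $\alpha=2/\sigma^2$, i.e. for input $\boldsymbol{r}\in\mathbb{R}^n$ (a row vector) the hidden output is $\boldsymbol{h}$ with $h_j=\exp(\alpha(\boldsymbol{r}\boldsymbol{W}_1)_j)/\sum_{l=1}^{2^k}\exp(\alpha(\boldsymbol{r}\boldsymbol{W}_1)_l)$; and the output layer computes $\boldsymbol{v}=\boldsymbol{h}\boldsymbol{W}_2\in\mathbb{R}^k$. The decoder sets $\hat{b}_i=1$ if $v_i>1/2$ and $\hat{b}_i=0$ if $v_i<1/2$ (either value if $v_i=1/2$). Then this decoder is bit-wise optimal: for every $\boldsymbol{r}$ and every $i=1,\dots,k$, $\hat{b}_i\in\mathrm{argmax}_{\beta\in\{0,1\}}\,p(\boldsymbol{r}\mid b_i=\beta)$. No training is required.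
   Context: Transmission model: information words $\boldsymbol{b}$ are uniformly distributed on $\{0,1\}^k$ (so all codewords are equally likely); the codeword $\boldsymbol{c}$ is mapped by BPSK to $\boldsymbol{s}$ with $s_i=2c_i-1$; the channel is additive white Gaussian noise, $\boldsymbol{r}=\boldsymbol{s}+\boldsymbol{w}$ with $w_1,\dots,w_n$ i.i.d. $\mathcal{N}(0,\sigma^2)$, so $p(\boldsymbol{r}\mid\boldsymbol{s})=\prod_{i=1}^n (2\pi\sigma^2)^{-1/2}\exp(-(r_i-s_i)^2/(2\sigma^2))$, and $p(\boldsymbol{r}\mid b_i=\beta)$ is the conditional density of $\boldsymbol{r}$ given that the $i$-th information bit equals $\beta$. A decoder is bit-wise optimal if each estimated bit $\hat{b}_i$ maximizes $p(\boldsymbol{r}\mid b_i=\beta)$ over $\beta\in\{0,1\}$ (this minimizes the bit error rate). *)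

(* Defs.v *)
From HB Require Import structures.
From mathcomp Require Import all_boot all_order all_algebra.
From mathcomp Require Import all_classical all_reals all_analysis.
Set Implicit Arguments. Unset Strict Implicit. Unset Printing Implicit Defensive.
Import Order.TTheory GRing.Theory Num.Theory.
Local Open Scope ring_scope.

Section Decoding.
Variables (R : realType) (k n : nat).

Definition bitR (x : 'F_2) : R := (x : nat)%:R.

Definition encode (G : 'M['F_2]_(k, n)) (b : 'rV['F_2]_k) : 'rV['F_2]_n := b *m G.

Definition bpsk (c : 'rV['F_2]_n) : 'rV[R]_n := \row_i (2 * bitR (c 0 i) - 1).

Definition awgn_density (sigma : R) (r s : 'rV[R]_n) : R :=
  \prod_(i < n) ((Num.sqrt (2 * pi * sigma ^+ 2))^-1 *
                 expR (- (r 0 i - s 0 i) ^+ 2 / (2 * sigma ^+ 2))).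

(* p(r | b_i = beta), information words uniformly distributed:
   average of p(r | s(c(b))) over the information words b with b_i = beta *)
Definition cond_density (G : 'M['F_2]_(k, n)) (sigma : R) (r : 'rV[R]_n)
    (i : 'I_k) (beta : 'F_2) : R :=
  (\sum_(b : 'rV['F_2]_k | b 0 i == beta) awgn_density sigma r (bpsk (encode G b)))
  / (#|[pred b : 'rV['F_2]_k | b 0 i == beta]|)%:R.

(* the network; e j = b^(j) is the listing of all 2^k information words *)
Definition W1 (G : 'M['F_2]_(k, n)) (e : 'I_(2 ^ k) -> 'rV['F_2]_k) : 'M[R]_(n, 2 ^ k) :=
  \matrix_(l, j) bitR (encode G (e j) 0 l).

Definition W2 (e : 'I_(2 ^ k) -> 'rV['F_2]_k) : 'M[R]_(2 ^ k, k) :=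
  \matrix_(j, i) bitR (e j 0 i).

Definition hidden (alpha : R) (G : 'M['F_2]_(k, n)) (e : 'I_(2 ^ k) -> 'rV['F_2]_k)
    (r : 'rV[R]_n) : 'rV[R]_(2 ^ k) :=
  let z := r *m W1 G e in
  \row_j (expR (alpha * z 0 j) / \sum_(l < 2 ^ k) expR (alpha * z 0 l)).

Definition nn_output (sigma : R) (G : 'M['F_2]_(k, n)) (e : 'I_(2 ^ k) -> 'rV['F_2]_k)
    (r : 'rV[R]_n) : 'rV[R]_k :=
  hidden (2 / sigma ^+ 2) G e r *m W2 e.

Definition nn_decision (v : 'rV[R]_k) (bhat : 'rV['F_2]_k) : Prop :=
  forall i : 'I_k, (2^-1 < v 0 i -> bhat 0 i = 1) /\ (v 0 i < 2^-1 -> bhat 0 i = 0).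

End Decoding.

(* Main.v *)
Require Import Defs.
From HB Require Import structures.
From mathcomp Require Import all_boot all_order all_algebra.
From mathcomp Require Import all_classical all_reals all_analysis.
From mathcomp Require Import ring lra.
Set Implicit Arguments.
Import Order.TTheory GRing.Theory Num.Theory.
Local Open Scope ring_scope.

Lemma F2cases (x : 'F_2) : x = 0 \/ x = 1.
Proof. case: x => [[|[|m]] Hm]; [left|right|by []]; exact: val_inj. Qed.

Lemma F2add (x : 'F_2) : (x + 1 == 0) = (x == 1).
Proof. by case: (F2cases x) => ->. Qed.

Lemma F2add' (x : 'F_2) : (x + 1 == 1) = (x == 0).
Proof. by case: (F2cases x) => ->. Qed.

Lemma bitR0 (R : realType) : bitR R 0 = 0. Proof. by rewrite /bitR. Qed.
Lemma bitR1 (R : realType) : bitR R 1 = 1. Proof. by rewrite /bitR. Qed.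

Section Proof.
Variables (R : realType) (k n : nat) (G : 'M['F_2]_(k, n)) (sigma : R) (r : 'rV[R]_n).
Hypothesis hsigma : 0 < sigma.

Definition dotc (c : 'rV['F_2]_n) : R := \sum_l r 0 l * bitR R (c 0 l).
Definition Kc : R := \prod_(l < n) ((Num.sqrt (2 * pi * sigma ^+ 2))^-1 *
   expR (- (r 0 l + 1) ^+ 2 / (2 * sigma ^+ 2))).

Lemma awgn_fact (c : 'rV['F_2]_n) :
  awgn_density sigma r (bpsk R c) = Kc * expR (2 / sigma ^+ 2 * dotc c).
Proof.
rewrite /awgn_density /Kc /dotc mulr_sumr expR_sum -big_split /=.
apply: eq_bigr => l _; rewrite mxE -[RHS]mulrA -expRD; congr (_ * _); congr expR.
have s0 : sigma != 0 by rewrite gt_eqF.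
by case: (F2cases (c 0 l)) => ->; rewrite ?bitR0 ?bitR1; field.
Qed.

End Proof.

Lemma Kc_ge0 (R : realType) n (sigma : R) (r : 'rV[R]_n) : 0 <= Kc _ sigma r.
Proof.
rewrite /Kc; apply: prodr_ge0 => l _; apply: mulr_ge0; last exact: expR_ge0.
by rewrite invr_ge0 sqrtr_ge0.
Qed.

Lemma card_flip k (i : 'I_k) :
  #|[pred b : 'rV['F_2]_k | b 0 i == 0]| = #|[pred b : 'rV['F_2]_k | b 0 i == 1]|.
Proof.
rewrite -!sum1_card (reindex_inj (addIr (delta_mx 0 i))) /=.
apply: eq_bigl => b; rewrite !inE !mxE !eqxx /= F2add.
by [].
Qed.

Theorem theorem2 (R : realType) (k n : nat) (G : 'M['F_2]_(k, n))
    (hG : \rank G = k)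
    (e : 'I_(2 ^ k) -> 'rV['F_2]_k) (he : bijective e)
    (sigma : R) (hsigma : 0 < sigma)
    (r : 'rV[R]_n) (bhat : 'rV['F_2]_k) :
  nn_decision (nn_output sigma G e r) bhat ->
  forall (i : 'I_k) (beta : 'F_2),
    cond_density G sigma r i beta <= cond_density G sigma r i (bhat 0 i).
Proof.
move=> Hdec i beta.
set E := fun b : 'rV['F_2]_k => expR (2 / sigma ^+ 2 * dotc _ r (encode G b)).
set S := fun beta : 'F_2 => \sum_(b : 'rV['F_2]_k | b 0 i == beta) E b.
set N := (#|[pred b : 'rV['F_2]_k | b 0 i == 1]|)%:R : R.
have Hcond : forall beta, cond_density G sigma r i beta = Kc _ sigma r * S beta / N.
  move=> bt; rewrite /cond_density /S /N mulr_sumr.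
  have -> : #|[pred b : 'rV['F_2]_k | b 0 i == bt]| =
            #|[pred b : 'rV['F_2]_k | b 0 i == 1]|.
    by case: (F2cases bt) => ->; rewrite ?card_flip.
  congr (_ / _); apply: eq_bigr => b _; by rewrite (@awgn_fact _ _ _ _ hsigma).
have S_ge0 : forall bt, 0 <= S bt.
  by move=> bt; apply: sumr_ge0 => b _; exact: expR_ge0.
have reind : forall F : 'rV['F_2]_k -> R, \sum_j F (e j) = \sum_b F b.
  by move=> F; rewrite (reindex e) //; exact: onW_bij.
have Zsplit : \sum_b E b = S 0 + S 1.
  rewrite (bigID (fun b : 'rV['F_2]_k => b 0 i == 0)) /=; congr (_ + _).
  by apply: eq_bigl => b; case: (F2cases (b 0 i)) => ->.
have Z_gt0 : 0 < S 0 + S 1.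
  rewrite -Zsplit (bigD1 0) //=; apply: ltr_wpDr; first by apply: sumr_ge0 => b _; exact: expR_ge0.
  exact: expR_gt0.
have Hv : nn_output sigma G e r 0 i = S 1 / (S 0 + S 1).
  rewrite /nn_output mxE -Zsplit.
  have -> : \sum_j hidden (2 / sigma ^+ 2) G e r 0 j * W2 R e j i =
            \sum_j (E (e j) * bitR R (e j 0 i)) / \sum_b E b.
    have hz : forall j, \sum_l r 0 l * W1 R G e l j = dotc R r (encode G (e j)).
      by move=> j; apply: eq_bigr => l _; rewrite !mxE.
    apply: eq_bigr => j _; rewrite !mxE -reind mulrAC hz; congr (_ / _).
    by apply: eq_bigr => l _; rewrite mxE hz.
  rewrite -mulr_suml (reind (fun b => E b * bitR R (b 0 i))); congr (_ / _).
  rewrite (bigID (fun b : 'rV['F_2]_k => b 0 i == 1)) /= /S.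
  rewrite [X in _ + X]big1 ?addr0.
    by apply: eq_bigr => b /eqP ->; rewrite bitR1 mulr1.
  by move=> b; case: (F2cases (b 0 i)) => -> //= _; rewrite bitR0 mulr0.
have [Hd1 Hd0] := Hdec i.
rewrite !Hcond; apply: ler_wpM2r; first by rewrite invr_ge0 ler0n.
apply: ler_wpM2l; first exact: Kc_ge0.
case: (F2cases beta) => ->; case: (F2cases (bhat 0 i)) => Hb; rewrite Hb //.
- rewrite leNgt; apply/negP => hlt.
  have : nn_output sigma G e r 0 i < 2^-1.
    rewrite Hv ltr_pdivrMr //; move: hlt; generalize (S 0) (S 1) => a b h; lra.
  by move/Hd0; rewrite Hb.
- rewrite leNgt; apply/negP => hlt.
  have : 2^-1 < nn_output sigma G e r 0 i.
    rewrite Hv ltr_pdivlMr //; move: hlt; generalize (S 0) (S 1) => a b h; lra.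
  by move/Hd1; rewrite Hb.
Qed.
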